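(* Let $f:\mathbb{R}^n\to\mathbb{R}$ be subdifferentiable with subgradient Lipschitz continuous with constant $L>0$ (i.e. $\|g_x-g_y\|\le L\|x-y\|$ for all $x,y$, $g_x\in\partial f(x)$, $g_y\in\partial f(y)$). Let $M\ge 0$ be an integer, $0<\gamma<1$, and $(\eta_k)_{k\ge0}$ a sequence of positive numbers with $\sum_k\eta_k<\infty$. Consider iterates $x_{k+1}=x_k+\alpha_k d_k$, where at step $k$ we are given $g_k\in\partial f(x_k)$ and a nonzero search direction $d_k\in\mathbb{R}^n$, and $\alpha_k=(1/2)^{h_k}$ where $h_k$ is the smallest integer in $\{0,1,2,\dots\}$ such that $$f(x_k+\alpha_k d_k)\le \max_{0\le j\le \min\{k,M\}} f(x_{k-j})+\gamma\alpha_k g_k^Td_k+\eta_k .$$ Then for each $k$, either $\alpha_k=1$ or $$\alpha_k\ge \frac{\gamma-1}{L}\,\frac{g_k^Td_k}{\|d_k\|^2}.$$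
   Context: A subgradient of $f$ at $x$ is any $g\in\mathbb{R}^n$ with $f(y)\ge f(x)+g^T(y-x)$ for all $y$; $\partial f(x)$ is the set of subgradients at $x$, and $f$ is subdifferentiable if $\partial f(x)\neq\emptyset$ everywhere. *)

(* Defs.v *)
From HB Require Import structures.
From mathcomp Require Import all_boot all_order all_algebra.
From mathcomp Require Import all_classical all_reals all_analysis.
Set Implicit Arguments. Unset Strict Implicit. Unset Printing Implicit Defensive.
Import Order.TTheory GRing.Theory Num.Theory.
Local Open Scope ring_scope.

Definition dotv (R : realType) (n : nat) (u v : 'rV[R]_n) : R :=
  \sum_(i < n) u 0 i * v 0 i.

Definition enorm (R : realType) (n : nat) (u : 'rV[R]_n) : R :=
  Num.sqrt (dotv u u).

Definition subgradient (R : realType) (n : nat) (f : 'rV[R]_n -> R)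
  (x g : 'rV[R]_n) : Prop :=
  forall y, f x + dotv g (y - x) <= f y.

Definition subdifferentiable (R : realType) (n : nat) (f : 'rV[R]_n -> R) :=
  forall x, exists g, subgradient f x g.

Definition subgrad_lipschitz (R : realType) (n : nat) (f : 'rV[R]_n -> R)
  (L : R) : Prop :=
  forall x y gx gy, subgradient f x gx -> subgradient f y gy ->
    enorm (gx - gy) <= L * enorm (x - y).

Definition nm_max (R : realType) (n : nat) (f : 'rV[R]_n -> R)
  (x : nat -> 'rV[R]_n) (M k : nat) : R :=
  \big[Num.max/f (x k)]_(j < (minn k M).+1) f (x (k - j)%N).

Definition accept (R : realType) (n : nat) (f : 'rV[R]_n -> R)
  (x g d : nat -> 'rV[R]_n) (eta : nat -> R) (M : nat) (gamma : R)
  (k : nat) (a : R) : Prop :=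
  f (x k + a *: d k) <= nm_max f x M k + gamma * a * dotv (g k) (d k) + eta k.

(* Main.v *)
Require Import Defs.
From HB Require Import structures.
From mathcomp Require Import all_boot all_order all_algebra.
From mathcomp Require Import all_classical all_reals all_analysis.
From mathcomp Require Import ring lra.
Import Order.TTheory GRing.Theory Num.Theory numFieldNormedType.Exports.
Local Open Scope ring_scope.

Section Aux.
Variables (R : realType) (n : nat).
Implicit Types u v w : 'rV[R]_n.

Lemma dotvC u v : dotv u v = dotv v u.
Proof. by rewrite /dotv; apply: eq_bigr => i _; rewrite mulrC. Qed.

Lemma dotvDl u v w : dotv (u + v) w = dotv u w + dotv v w.
Proof. by rewrite /dotv -big_split; apply: eq_bigr => i _; rewrite !mxE mulrDl. Qed.

Lemma dotvZl (t : R) u w : dotv (t *: u) w = t * dotv u w.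
Proof. by rewrite /dotv mulr_sumr; apply: eq_bigr => i _; rewrite !mxE mulrA. Qed.

Lemma dotvNl u w : dotv (- u) w = - dotv u w.
Proof. by rewrite -scaleN1r dotvZl mulN1r. Qed.

Lemma dotvBl u v w : dotv (u - v) w = dotv u w - dotv v w.
Proof. by rewrite dotvDl dotvNl. Qed.

Lemma dotvZr (t : R) u w : dotv u (t *: w) = t * dotv u w.
Proof. by rewrite dotvC dotvZl dotvC. Qed.

Lemma dotvBr u v w : dotv w (u - v) = dotv w u - dotv w v.
Proof. by rewrite dotvC dotvBl !(dotvC w). Qed.

Lemma dotv_ge0 u : 0 <= dotv u u.
Proof. by apply: sumr_ge0 => i _; rewrite -expr2 sqr_ge0. Qed.

Lemma dotv_gt0 u : u != 0 -> 0 < dotv u u.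
Proof.
move=> u0; rewrite lt_def dotv_ge0 andbT; apply/negP => /eqP H.
move/negP: u0; apply; apply/eqP/rowP => i; rewrite mxE.
have hp : forall j : 'I_n, xpredT j -> 0 <= u 0 j * u 0 j by move=> j _; rewrite -expr2 sqr_ge0.
have := @psumr_eq0P R _ xpredT (fun j => u 0 j * u 0 j) hp H i isT.
by move/eqP; rewrite mulf_eq0 orbb => /eqP.
Qed.

Lemma enorm_sq u : enorm u ^+ 2 = dotv u u.
Proof. by rewrite /enorm sqr_sqrtr // dotv_ge0. Qed.

Lemma enormZ (t : R) u : enorm (t *: u) = `|t| * enorm u.
Proof.
rewrite /enorm dotvZl dotvZr mulrA -expr2 sqrtrM ?sqr_ge0 //.
by rewrite sqrtr_sqr.
Qed.

Lemma cs_key u v s : 2 * s * dotv u v <= s ^+ 2 * dotv u u + dotv v v.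
Proof.
have := dotv_ge0 (s *: u - v).
rewrite !dotvBl !dotvBr !dotvZl !dotvZr (dotvC v u); nra.
Qed.

Lemma cs_zero u v : dotv u u = 0 -> dotv u v <= 0.
Proof.
move=> a0; rewrite leNgt; apply/negP => bpos.
have := cs_key u v ((dotv v v + 1) / dotv u v).
rewrite a0 mulr0 add0r -mulrA divfK ?gt_eqF //; have := dotv_ge0 v; lra.
Qed.

Lemma enorm_ge0 u : 0 <= enorm u.
Proof. exact: sqrtr_ge0. Qed.

Lemma enorm_gt0 u : dotv u u != 0 -> 0 < enorm u.
Proof.
move=> h; rewrite lt_def enorm_ge0 andbT; apply/eqP => e0.
by move: h; rewrite -enorm_sq e0 expr0n /= eqxx.
Qed.

Lemma cauchy_schwarz u v : dotv u v <= enorm u * enorm v.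
Proof.
have [a0|a0] := eqVneq (dotv u u) 0.
  by apply: le_trans (@cs_zero u v a0) _; apply: mulr_ge0; apply: enorm_ge0.
have [c0|c0] := eqVneq (dotv v v) 0.
  by rewrite dotvC; apply: le_trans (@cs_zero v u c0) _; apply: mulr_ge0; apply: enorm_ge0.
have eu0 := @enorm_gt0 u a0; have ev0 := @enorm_gt0 v c0.
have := cs_key u v (enorm v / enorm u).
rewrite -(enorm_sq u) -(enorm_sq v).
have : enorm v / enorm u * enorm u = enorm v by rewrite divfK ?gt_eqF.
have : 0 < enorm v / enorm u by rewrite divr_gt0.
set s := enorm v / enorm u; set eu := enorm u; set ev := enorm v.
move=> s0 seq H.
nra.
Qed.

Lemma descent (f : 'rV[R]_n -> R) (L : R) (x0 g0 dd : 'rV[R]_n) (s : R) :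
  subdifferentiable f -> 0 <= L -> subgrad_lipschitz f L ->
  subgradient f x0 g0 -> 0 <= s -> forall i : nat,
  2 * f (x0 + (s * i%:R) *: dd) <= 2 * f x0 + 2 * (s * i%:R) * dotv g0 dd
     + L * s ^+ 2 * dotv dd dd * (i%:R * i.+1%:R).
Proof.
move=> sd L0 lip sg s0; elim=> [|i IH].
  by rewrite !(mulr0, mul0r, scale0r, addr0).
set y1 := x0 + (s * i.+1%:R) *: dd; set y0 := x0 + (s * i%:R) *: dd.
have [G sG] := sd y1.
have h1 := sG y0.
have e1 : y0 - y1 = (- s) *: dd.
  by apply/rowP => j; rewrite /y0 /y1 !mxE -natr1; ring.
rewrite e1 dotvZr in h1.
have h2 := lip y1 x0 G g0 sG sg.
have e2 : y1 - x0 = (s * i.+1%:R) *: dd.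
  by apply/rowP => j; rewrite /y1 !mxE; ring.
have si0 : 0 <= s * i.+1%:R by rewrite mulr_ge0.
rewrite e2 enormZ ger0_norm // in h2.
have h3 := cauchy_schwarz (G - g0) dd; rewrite dotvBl in h3.
have h4 : enorm dd * enorm dd = dotv dd dd by rewrite -expr2 enorm_sq.
have nd0 := enorm_ge0 dd.
have h5 : dotv G dd <= dotv g0 dd + L * (s * i.+1%:R) * dotv dd dd.
  have : enorm (G - g0) * enorm dd <= L * (s * i.+1%:R) * enorm dd * enorm dd.
    by apply: ler_wpM2r => //; rewrite -mulrA.
  rewrite -mulrA h4; lra.
have h6 := ler_wpM2l s0 h5.
rewrite /y0 /y1 in IH h1 h6 *.
move: IH h1 h6; rewrite -!natr1.
set F1 := f _; set F0 := f _.
move=> IH h1 h6.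
nra.
Qed.
End Aux.

Lemma nm_max_ge (R : realType) (n : nat) (f : 'rV[R]_n -> R) x M k :
  f (x k) <= nm_max f x M k.
Proof.
rewrite /nm_max; elim/big_rec: _ => // i r _ hr.
by rewrite le_max hr orbT.
Qed.

Theorem lemma3 (R : realType) (n : nat) (f : 'rV[R]_n -> R) (L : R)
  (M : nat) (gamma : R) (eta : nat -> R)
  (x g d : nat -> 'rV[R]_n) (h : nat -> nat) :
  subdifferentiable f ->
  0 < L -> subgrad_lipschitz f L ->
  0 < gamma -> gamma < 1 ->
  (forall k, 0 < eta k) -> cvgn (series (eta : R^nat)) ->
  (forall k, subgradient f (x k) (g k)) ->
  (forall k, d k != 0) ->
  (forall k, x k.+1 = x k + (2^-1) ^+ h k *: d k) ->
  (forall k, accept f x g d eta M gamma k ((2^-1) ^+ h k)) ->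
  (forall k (h' : nat), (h' < h k)%N -> ~ accept f x g d eta M gamma k ((2^-1) ^+ h')) ->
  forall k, (2^-1) ^+ h k = 1 :> R \/
    (gamma - 1) / L * (dotv (g k) (d k) / enorm (d k) ^+ 2) <= (2^-1) ^+ h k.
Proof.
move=> sd L0 lip g0 g1 eta0 _ sg dn0 _ acc nacc k.
case Eh: (h k) => [|m]; first by left; rewrite expr0.
right.
have na := nacc k m; rewrite Eh ltnSn in na; have {}na := na isT.
have na' : nm_max f x M k + gamma * (2^-1) ^+ m * dotv (g k) (d k) + eta k
    < f (x k + (2^-1) ^+ m *: d k).
  by rewrite ltNge; apply/negP.
have hmax := @nm_max_ge _ _ f x M k.
have := eta0 k.
move: na' hmax.
set a := (2^-1) ^+ m.
have a0 : 0 < a by rewrite exprn_gt0 // invr_gt0.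
have -> : (2^-1) ^+ m.+1 = a / 2 by rewrite exprS mulrC.
set D := dotv (d k) (d k).
have D0 : 0 < D := @dotv_gt0 _ _ _ (dn0 k).
rewrite enorm_sq -/D.
set gd := dotv (g k) (d k).
move=> na' hmax e0.
have key : forall N : nat, (0 < N)%N ->
    2 * ((gamma - 1) * gd) < L * a * D * (N.+1%:R / N%:R).
  move=> N N0.
  have N0' : 0 < N%:R :> R by rewrite ltr0n.
  have := @descent _ _ f L (x k) (g k) (d k) (a / N%:R) sd (ltW L0) lip (sg k) (divr_ge0 (ltW a0) (ltW N0')) N.
  rewrite divfK ?gt_eqF //.
  have -> : L * (a / N%:R) ^+ 2 * D * (N%:R * N.+1%:R) = a * (L * a * D * (N.+1%:R / N%:R)).
    by field; rewrite gt_eqF.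
  move=> H; rewrite -/gd in H.
  have : a * (2 * ((gamma - 1) * gd)) < a * (L * a * D * (N.+1%:R / N%:R)) by lra.
  by rewrite ltr_pM2l.
set c := (gamma - 1) * gd.
have LD0 : 0 < L * D by rewrite mulr_gt0.
have -> : (gamma - 1) / L * (gd / D) = c / (L * D).
  by rewrite /c; field; rewrite !gt_eqF.
rewrite ler_pdivrMr //.
rewrite leNgt; apply/negP => hc.
set b := a / 2 * (L * D).
have b0 : 0 < b by rewrite mulr_gt0 // divr_gt0.
have cb : 0 < c - b by rewrite subr_gt0.
have q0 : 0 <= b / (c - b) by rewrite divr_ge0 // ltW.
have hN := archi_boundP q0.
set N := Num.Def.archi_bound _ in hN.
have N0 : (0 < N)%N.
  by rewrite -(ltr0n R); apply: le_lt_trans hN.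
have N0' : 0 < N%:R :> R by rewrite ltr0n.
have := key N N0.
have -> : L * a * D * (N.+1%:R / N%:R) = 2 * b + 2 * (b / N%:R).
  by rewrite /b -natr1; field; rewrite gt_eqF.
have : b / N%:R < c - b.
  by rewrite ltr_pdivrMr // mulrC -ltr_pdivrMr.
rewrite -/c; lra.
Qed.
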